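(* Let $R$ be a commutative Noetherian ring, $M$ a finitely generated $R$-module, $X \subseteq \mathrm{Spec}(R)$ a basic set, $\mathscr{E}$ an $R$-submodule of $\mathrm{Hom}_R(M,R)$, and $S \subseteq M$ a subset. There exists a finite set of primes $\Lambda \subseteq X$ such that for every $\mathfrak{p} \in X \setminus \Lambda$ there exists $\mathfrak{q} \in \Lambda$ with $\mathfrak{q} \subsetneq \mathfrak{p}$ and $\delta^{\mathscr{E}}_\mathfrak{p}(S,M) = \delta^{\mathscr{E}}_\mathfrak{q}(S,M)$.
   Context: A subset $X \subseteq \mathrm{Spec}(R)$ is basic if, whenever the intersection of a family of primes in $X$ is a prime ideal, that intersection belongs to $X$. $\mathscr{E}_\mathfrak{p}$ is viewed inside $\mathrm{Hom}_{R_\mathfrak{p}}(M_\mathfrak{p},R_\mathfrak{p})$. A free $\mathscr{E}_\mathfrak{p}$-summand of $M_\mathfrak{p}$ is a direct summand $F$ (with complement $G$) of $M_\mathfrak{p}$, $F \cong R_\mathfrak{p}^n$, such that each coordinate of the projection $M_\mathfrak{p} \to F \cong R_\mathfrak{p}^n$ along $G$ lies in $\mathscr{E}_\mathfrak{p}$. With $\langle S\rangle$ the submodule generated by $S$, $\delta^{\mathscr{E}}_\mathfrak{p}(S,M)$ is the largest integer $n \ge 0$ such that there exists a free $\mathscr{E}_\mathfrak{p}$-summand of $M_\mathfrak{p}$ of rank $n$ contained in $\langle S\rangle_\mathfrak{p}$. *)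

(* Defs.v *)
(* Localization is encoded at the setoid level:
   an element m/s of M_p is a pair (m, s) with s \notin p, and equality in M_p
   is the usual relation (m,s) ~ (m',s') iff u (s' m - s m') = 0 for some u \notin p. *)
From HB Require Import structures.
From mathcomp Require Import all_boot all_algebra.
From Stdlib Require Import ClassicalEpsilon.
Set Implicit Arguments. Unset Strict Implicit. Unset Printing Implicit Defensive.
Import GRing.Theory.
Local Open Scope ring_scope.

Section RingDefs.
Variable R : comPzRingType.

Definition is_ideal (I : R -> Prop) : Prop :=
  I 0 /\ (forall x y, I x -> I y -> I (x + y)) /\ (forall a x, I x -> I (a * x)).

Definition is_prime (p : R -> Prop) : Prop :=
  is_ideal p /\ ~ p 1 /\ (forall a b, p (a * b) -> p a \/ p b).

Definition noetherian : Prop :=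
  forall I, is_ideal I -> exists (n : nat) (g : 'I_n -> R),
    forall x, I x <-> exists c : 'I_n -> R, x = \sum_(i < n) c i * g i.

Definition bigcapR (F : (R -> Prop) -> Prop) : R -> Prop :=
  fun x => forall q, F q -> q x.

Definition subset_Spec (X : (R -> Prop) -> Prop) : Prop :=
  forall p, X p -> is_prime p.

Definition basic (X : (R -> Prop) -> Prop) : Prop :=
  forall F : (R -> Prop) -> Prop, (forall q, F q -> X q) ->
    is_prime (bigcapR F) -> X (bigcapR F).

End RingDefs.

Section ModDefs.
Variables (R : comPzRingType) (M : lmodType R).

Definition fin_gen : Prop :=
  exists (n : nat) (g : 'I_n -> M), forall m, exists c : 'I_n -> R,
    m = \sum_(i < n) c i *: g i.

Definition linearR (f : M -> R) : Prop :=
  forall a x y, f (a *: x + y) = a * f x + f y.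

Definition hom_submod (E : (M -> R) -> Prop) : Prop :=
  (forall f, E f -> linearR f) /\ E (fun _ => 0) /\
  (forall f g, E f -> E g -> E (fun x => f x + g x)) /\
  (forall a f, E f -> E (fun x => a * f x)).

Definition span (S : M -> Prop) (m : M) : Prop :=
  exists (n : nat) (c : 'I_n -> R) (v : 'I_n -> M),
    (forall i, S (v i)) /\ m = \sum_(i < n) c i *: v i.

Section Loc.
Variable p : R -> Prop.

(* R_p : pairs (a, s) = a/s with s \notin p *)
Definition locR_valid (x : R * R) : Prop := ~ p x.2.
Definition locR_eq (x y : R * R) : Prop :=
  exists u, ~ p u /\ u * (y.2 * x.1 - x.2 * y.1) = 0.

Definition locM_valid (x : M * R) : Prop := ~ p x.2.
Definition locM_eq (x y : M * R) : Prop :=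
  exists u, ~ p u /\ u *: (y.2 *: x.1 - x.2 *: y.1) = 0.
Definition locM_zero : M * R := (0, 1).
Definition locM_add (x y : M * R) : M * R := (y.2 *: x.1 + x.2 *: y.1, x.2 * y.2).
Definition locM_scale (c : R * R) (x : M * R) : M * R := (c.1 *: x.1, c.2 * x.2).
Definition locM_sum (n : nat) (c : 'I_n -> R * R) (e : 'I_n -> M * R) : M * R :=
  foldr locM_add locM_zero [seq locM_scale (c i) (e i) | i <- enum 'I_n].

Definition loc_sub (N : M -> Prop) (x : M * R) : Prop :=
  exists m s, N m /\ ~ p s /\ locM_eq x (m, s).

Definition loc_submod (G : M * R -> Prop) : Prop :=
  (forall x, G x -> locM_valid x) /\
  (forall x y, G x -> locM_valid y -> locM_eq x y -> G y) /\
  G locM_zero /\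
  (forall x y, G x -> G y -> G (locM_add x y)) /\
  (forall c x, locR_valid c -> G x -> G (locM_scale c x)).

(* the element f/s of E_p (f \in E, s \notin p), viewed in Hom_{R_p}(M_p, R_p),
   applied to m/t *)
Definition Eapp (phi : (M -> R) * R) (x : M * R) : R * R :=
  (phi.1 x.1, phi.2 * x.2).

(* There is a free E_p-summand of M_p of rank n contained in N_p:
   F = R_p e_1 + ... + R_p e_n with basis e (i.e. the isomorphism F ~ R_p^n),
   a complement G with M_p = F (+) G, and the coordinates of the projection
   M_p -> F ~ R_p^n along G are the elements phi_i of E_p. *)
Definition free_E_summand_in (E : (M -> R) -> Prop) (N : M -> Prop) (n : nat) : Prop :=
  exists (e : 'I_n -> M * R) (G : M * R -> Prop) (phi : 'I_n -> (M -> R) * R),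
    (forall i, locM_valid (e i)) /\ loc_submod G /\
    (forall i, loc_sub N (e i)) /\
    (forall i, E (phi i).1 /\ ~ p (phi i).2) /\
    (forall x, locM_valid x -> exists g, G g /\
        locM_eq x (locM_add (locM_sum (fun i => Eapp (phi i) x) e) g)) /\
    (forall (c c' : 'I_n -> R * R) g g',
        (forall i, locR_valid (c i) /\ locR_valid (c' i)) -> G g -> G g' ->
        locM_eq (locM_add (locM_sum c e) g) (locM_add (locM_sum c' e) g') ->
        forall i, locR_eq (c i) (c' i)).

Definition delta (E : (M -> R) -> Prop) (S : M -> Prop) : nat :=
  epsilon (inhabits 0%N) (fun n => free_E_summand_in E (span S) n /\
    forall m, free_E_summand_in E (span S) m -> (m <= n)%N).

End Loc.
End ModDefs.

(* Main.v *)
Require Import Defs.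
From HB Require Import structures.
From mathcomp Require Import all_boot all_algebra ring.
From Stdlib Require Import ClassicalEpsilon Classical FunctionalExtensionality PropExtensionality.
From Stdlib Require List.
Set Implicit Arguments. Unset Strict Implicit. Unset Printing Implicit Defensive.
Import GRing.Theory.
Local Open Scope ring_scope.

Section Noeth.
Variable R : comPzRingType.

Definition strictI (I J : R -> Prop) := (forall x, I x -> J x) /\ exists x, J x /\ ~ I x.

Lemma fin_choice_nat n (Q : 'I_n -> nat -> Prop) :
  (forall i, exists k, Q i k) -> exists f : 'I_n -> nat, forall i, Q i (f i).
Proof.
move=> H.
exists (fun i => proj1_sig (constructive_indefinite_description _ (H i))).
move=> i; exact: proj2_sig (constructive_indefinite_description _ (H i)).
Qed.

Lemma sum_delta n (g : 'I_n -> R) i : \sum_(j < n) (j == i)%:R * g j = g i.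
Proof.
rewrite (bigD1 i) //= eqxx mul1r big1 ?addr0 // => j /negbTE ->; by rewrite mul0r.
Qed.

Lemma ideal_sum (I : R -> Prop) n (c g : 'I_n -> R) : is_ideal I ->
  (forall i, I (g i)) -> I (\sum_(i < n) c i * g i).
Proof.
move=> [I0 [ID IM]] Hg; apply: (big_ind I) => //.
by move=> i _; apply: IM.
Qed.

Hypothesis HN : noetherian R.

Lemma noeth_ind (Phi : (R -> Prop) -> Prop) :
  (forall I, is_ideal I -> (forall J, is_ideal J -> strictI I J -> Phi J) -> Phi I) ->
  forall I, is_ideal I -> Phi I.
Proof.
move=> step I0 HI0; apply: NNPP => bad0.
pose good I := is_ideal I /\ ~ Phi I.
have next: forall I, good I -> exists J, good J /\ strictI I J.
  move=> I [HI nI]; apply: NNPP => H; apply: nI; apply: step => // J HJ sJ.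
  apply: NNPP => nJ; apply: H; by exists J.
pose nx (x : {I | good I}) : {I | good I} :=
  let (J, HJ) := constructive_indefinite_description _ (next _ (proj2_sig x)) in
  exist _ J (proj1 HJ).
have nxS x : strictI (proj1_sig x) (proj1_sig (nx x)).
  rewrite /nx; case: (constructive_indefinite_description _ _) => J [] //.
pose ch k := proj1_sig (iter k nx (exist good I0 (conj HI0 bad0))).
have chS k : strictI (ch k) (ch k.+1) by rewrite /ch /=; apply: nxS.
have chI k : is_ideal (ch k) by rewrite /ch; case: (iter _ _ _) => J [].
have mono k l : (k <= l)%N -> forall x, ch k x -> ch l x.
  elim: l => [|l IH]; first by rewrite leqn0 => /eqP ->.
  rewrite leq_eqVlt => /orP [/eqP -> //| ] Hkl x Hx.
  by apply: (proj1 (chS l)); apply: IH.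
pose U x := exists k, ch k x.
have UI : is_ideal U.
  split; first by exists 0%N; case: (chI 0%N).
  split.
    move=> x y [k Hk] [l Hl]; exists (maxn k l).
    case: (chI (maxn k l)) => _ [HD _]; apply: HD.
      by apply: (mono k) => //; rewrite leq_maxl.
    by apply: (mono l) => //; rewrite leq_maxr.
  move=> a x [k Hk]; exists k; case: (chI k) => _ [_ HM]; exact: HM.
have [n [g Hg]] := HN UI.
have gU i : U (g i).
  apply/Hg; exists (fun j => (j == i)%:R); by rewrite sum_delta.
have [f Hf] := fin_choice_nat gU.
pose K := \max_(i < n) f i.
have UK x : U x -> ch K x.
  move=> /Hg [c ->]; apply: ideal_sum => // i.
  apply: (mono (f i)) => //; exact: leq_bigmax.
have [_ [x [Hx nx0]]] := chS K.
apply: nx0; apply: UK; by exists K.+1.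
Qed.

Lemma cap_ideal (Y : (R -> Prop) -> Prop) : subset_Spec Y -> is_ideal (bigcapR Y).
Proof.
move=> HY; split; first by move=> q /HY [[]].
split.
  by move=> x y Hx Hy q Yq; have [[_ [HD _]] _] := HY q Yq; apply: HD; [apply: Hx|apply: Hy].
by move=> a x Hx q Yq; have [[_ [_ HM]] _] := HY q Yq; apply: HM; apply: Hx.
Qed.

Definition coverc (Y : (R -> Prop) -> Prop) (L : seq (R -> Prop)) :=
  forall P, List.In P L -> is_prime P /\ exists F, (forall q, F q -> Y q) /\ P = bigcapR F.

Lemma coverA (Y : (R -> Prop) -> Prop) : subset_Spec Y ->
  exists L, coverc Y L /\ forall p, Y p -> exists P, List.In P L /\ forall x, P x -> p x.
Proof.
move=> HY.
pose Phi (I : R -> Prop) := forall Y, subset_Spec Y -> (forall x, I x <-> bigcapR Y x) ->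
  exists L, coverc Y L /\ forall p, Y p -> exists P, List.In P L /\ forall x, P x -> p x.
suff: Phi (bigcapR Y) by move=> H; apply: H.
apply: noeth_ind; last exact: cap_ideal.
move=> I HI IH Z HZ HIZ.
case: (classic (is_prime (bigcapR Z))) => Hpr.
  exists [:: bigcapR Z]; split.
    move=> P [<-|[]]; split => //; by exists Z.
  move=> p Zp; exists (bigcapR Z); split; first by left.
  by move=> x Hx; apply: Hx.
case: (classic (exists p, Z p)) => [[p0 Zp0]|nZ]; last first.
  exists [::]; split; first by move=> P [].
  by move=> p Zp; case: nZ; exists p.
have Hid := cap_ideal HZ.
have n1 : ~ bigcapR Z 1 by move=> H; have [_ [H1 _]] := HZ p0 Zp0; apply: H1; apply: H.
have [a [b [Hab [na nb]]]] : exists a b, bigcapR Z (a * b) /\ ~ bigcapR Z a /\ ~ bigcapR Z b.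
  apply: NNPP => H; apply: Hpr; split => //; split => // a b Hab.
  apply: NNPP => H2; apply: H; exists a, b; split => //; split => ?; apply: H2; [left|right] => //.
pose Za := fun q => Z q /\ q a.
pose Zb := fun q => Z q /\ q b.
have HZa : subset_Spec Za by move=> q [Zq _]; apply: HZ.
have HZb : subset_Spec Zb by move=> q [Zq _]; apply: HZ.
have [La [cLa HLa]] : exists L, coverc Za L /\ forall p, Za p -> exists P, List.In P L /\ forall x, P x -> p x.
  apply: (IH (bigcapR Za)) => //; first exact: cap_ideal.
  split; first by move=> x /HIZ Hx q [Zq _]; apply: Hx.
  exists a; split; first by move=> q [].
  by move/HIZ.
have [Lb [cLb HLb]] : exists L, coverc Zb L /\ forall p, Zb p -> exists P, List.In P L /\ forall x, P x -> p x.
  apply: (IH (bigcapR Zb)) => //; first exact: cap_ideal.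
  split; first by move=> x /HIZ Hx q [Zq _]; apply: Hx.
  exists b; split; first by move=> q [].
  by move/HIZ.
exists (La ++ Lb); split.
  move=> P /List.in_app_iff [HP|HP].
    have [PP [F [HF EP]]] := cLa P HP; split => //; exists F; split => // q /HF [] //.
  have [PP [F [HF EP]]] := cLb P HP; split => //; exists F; split => // q /HF [] //.
move=> p Zp.
have [_ [_ Hpp]] := HZ p Zp.
case: (Hpp a b (Hab p Zp)) => H.
  have [P [HP1 HP2]] := HLa p (conj Zp H); exists P; split => //; apply/List.in_app_iff; by left.
have [P [HP1 HP2]] := HLb p (conj Zp H); exists P; split => //; apply/List.in_app_iff; by right.
Qed.

Definition sametype (Js : list (R -> Prop)) (P p : R -> Prop) :=
  forall J, List.In J Js -> ((forall d, J d -> P d) <-> (forall d, J d -> p d)).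

Lemma coverB (Js : list (R -> Prop)) : forall (Y : (R -> Prop) -> Prop), subset_Spec Y ->
  exists L, coverc Y L /\ forall p, Y p -> exists P, List.In P L /\ (forall x, P x -> p x) /\ sametype Js P p.
Proof.
elim: Js => [|J Js IH] Y HY.
  have [L [cL HL]] := coverA HY; exists L; split => // p Yp.
  have [P [H1 H2]] := HL p Yp; exists P; split => //; split => // J [].
pose Y1 := fun q => Y q /\ (forall d, J d -> q d).
pose Y2 := fun q => Y q /\ ~ (forall d, J d -> q d).
have [L1 [c1 H1]] := IH Y1 (fun q Hq => HY q (proj1 Hq)).
have [L2 [c2 H2]] := IH Y2 (fun q Hq => HY q (proj1 Hq)).
exists (L1 ++ L2); split.
  move=> P /List.in_app_iff [HP|HP].
    have [PP [F [HF EP]]] := c1 P HP; split => //; exists F; split => // q /HF [] //.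
  have [PP [F [HF EP]]] := c2 P HP; split => //; exists F; split => // q /HF [] //.
move=> p Yp; case: (classic (forall d, J d -> p d)) => HJ.
  have [P [HP1 [HP2 HP3]]] := H1 p (conj Yp HJ).
  exists P; split; first by apply/List.in_app_iff; left.
  split => // J' [<-|HJ']; last exact: HP3.
  split; first by move=> H d Hd; apply: HP2; apply: H.
  have [_ [F [HF EP]]] := c1 P HP1.
  by move=> _ d Hd; rewrite EP => q Fq; have [_ ] := HF q Fq; apply.
have [P [HP1 [HP2 HP3]]] := H2 p (conj Yp HJ).
exists P; split; first by apply/List.in_app_iff; right.
split => // J' [<-|HJ']; last exact: HP3.
split; first by move=> H d Hd; apply: HP2; apply: H.
by move=> H; case: HJ.
Qed.

End Noeth.

Section Prime.
Variables (R : comPzRingType) (p : R -> Prop).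
Hypothesis Hp : is_prime p.

Lemma np1 : ~ p 1. Proof. case: Hp => _ [H _]; exact: H. Qed.
Lemma pp0 : p 0. Proof. by case: Hp => [[]]. Qed.
Lemma pM a b : p b -> p (a * b). Proof. move=> Hb; case: Hp => [[_ [_ H]]] _; exact: H. Qed.
Lemma pMr a b : p a -> p (a * b). Proof. by rewrite mulrC; apply: pM. Qed.
Lemma npM a b : ~ p a -> ~ p b -> ~ p (a * b).
Proof. by move=> na nb; case: Hp => _ [_ H] /H []. Qed.
Lemma np_prod (I : finType) (F : I -> R) : (forall i, ~ p (F i)) -> ~ p (\prod_i F i).
Proof.
move=> H; apply: (big_ind (fun x => ~ p x)); [exact: np1| |by move=> i _; apply: H].
by move=> x y; apply: npM.
Qed.

Lemma witness_prod (T : finType) (X : T -> R) :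
  (forall t, exists u, ~ p u /\ u * X t = 0) -> exists W, ~ p W /\ forall t, W * X t = 0.
Proof.
move=> H.
pose f t := proj1_sig (constructive_indefinite_description _ (H t)).
have Hf t : ~ p (f t) /\ f t * X t = 0 := proj2_sig (constructive_indefinite_description _ (H t)).
exists (\prod_t f t); split; first by apply: np_prod => t; case: (Hf t).
move=> t; rewrite (bigD1 t) //= mulrAC (proj2 (Hf t)) mul0r //.
Qed.
End Prime.

Section Loc.
Variables (R : comPzRingType) (M : lmodType R) (p : R -> Prop).
Hypothesis Hp : is_prime p.

Local Notation add := (@locM_add R M).
Local Notation zero := (@locM_zero R M).
Local Notation scale := (@locM_scale R M).
Local Notation leq := (@locM_eq R M p).
Local Notation valid := (@locM_valid R M p).

Lemma eq_cross x y : leq x y <-> exists u, ~ p u /\ (u * y.2) *: x.1 = (u * x.2) *: y.1.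
Proof.
split=> [[u [nu H]]|[u [nu H]]]; exists u; split => //.
  by apply/eqP; rewrite -subr_eq0 -!scalerA -scalerBr H.
by rewrite scalerBr !scalerA H subrr.
Qed.

Lemma eqR x : leq x x.
Proof. exists 1; split; [exact: np1 | by rewrite subrr scaler0]. Qed.

Lemma eqS x y : leq x y -> leq y x.
Proof. move=> [u [nu H]]; exists u; split => //; by rewrite -opprB scalerN H oppr0. Qed.

Lemma scA (a b c : R) (v : M) : c = a * b -> c *: v = a *: (b *: v).
Proof. by move=> ->; rewrite scalerA. Qed.

Lemma eqT x y z : ~ p y.2 -> leq x y -> leq y z -> leq x z.
Proof.
case: x => x1 x2; case: y => y1 y2; case: z => z1 z2 /= ny /eq_cross [u [nu H1]] /eq_cross [v [nv H2]].
apply/eq_cross; exists (u * v * y2); split; first by apply: npM => //; apply: npM.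
rewrite /= in H1 H2 *.
rewrite (@scA (v * z2) (u * y2)); last by ring.
rewrite H1 scalerA.
rewrite (@scA (u * x2) (v * z2)); last by ring.
rewrite H2 scalerA; congr (_ *: _); ring.
Qed.

Lemma add_congr x x' y y' : leq x x' -> leq y y' -> leq (add x y) (add x' y').
Proof.
case: x => x1 x2; case: y => y1 y2; case: x' => a1 a2; case: y' => b1 b2 /eq_cross [u [nu H1]] /eq_cross [v [nv H2]].
rewrite /= in H1 H2.
apply/eq_cross; exists (u * v); split; first by apply: npM.
rewrite /= !scalerDr !scalerA.
rewrite (@scA (v * b2 * y2) (u * a2) _ x1); last by ring.
rewrite (@scA (u * a2 * x2) (v * b2) _ y1); last by ring.
rewrite H1 H2 !scalerA; congr (_ *: _ + _ *: _); ring.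
Qed.

Lemma add0_eq x : leq (add x zero) x.
Proof.
apply/eq_cross; exists 1; split; first exact: np1.
by rewrite /= scaler0 addr0 scale1r mulr1.
Qed.

Lemma addz_eq x : leq (add zero x) x.
Proof.
apply/eq_cross; exists 1; split; first exact: np1.
by rewrite /= scaler0 add0r !mul1r scale1r.
Qed.

Lemma valid_add x y : valid x -> valid y -> valid (add x y).
Proof. by move=> Hx Hy; apply: npM. Qed.

Lemma valid_zero : valid zero.
Proof. exact: np1. Qed.

Lemma valid_scale c x : locR_valid p c -> valid x -> valid (scale c x).
Proof. by move=> Hc Hx; apply: npM. Qed.

Lemma valid_foldr (T : Type) (s : seq T) (t : T -> M * R) :
  (forall i, valid (t i)) -> valid (foldr add zero (map t s)).
Proof.
move=> H; elim: s => [|i s IH] /=; first exact: valid_zero.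
exact: valid_add.
Qed.

Lemma sum_single n (t : 'I_n -> M * R) j v : (forall i, valid (t i)) ->
  (forall i, i != j -> leq (t i) zero) -> leq (t j) v ->
  leq (foldr add zero [seq t i | i <- enum 'I_n]) v.
Proof.
move=> Hv Hz Hj.
suff H: forall s, uniq s -> leq (foldr add zero (map t s)) (if j \in s then t j else zero).
  have := H _ (enum_uniq 'I_n); rewrite mem_enum => H'.
  exact: eqT (Hv j) H' Hj.
have Wv s : valid (if j \in s then t j else zero) by case: (j \in s); [apply: Hv|apply: valid_zero].
elim=> [|i s IH] /=; first by move=> _; exact: eqR.
move=> /andP [nis us]; rewrite in_cons.
case: (eqVneq j i) => [Eji|nji] /=.
  subst j; rewrite (negbTE nis) in IH.
  apply: (@eqT _ (add (t i) zero)); first by apply: valid_add => //; apply: valid_zero.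
    by apply: add_congr; [apply: eqR| apply: IH].
  exact: add0_eq.
apply: (@eqT _ (add zero (if j \in s then t j else zero))); first by apply: valid_add => //; apply: valid_zero.
  by apply: add_congr; [apply: Hz; rewrite eq_sym| apply: IH].
exact: addz_eq.
Qed.

End Loc.

Section Lin.
Variables (R : comPzRingType) (M : lmodType R).
Variable h : M -> R.
Hypothesis Hh : linearR h.

Lemma lin0 : h 0 = 0.
Proof. by have := Hh (-1) 0 0; rewrite scaler0 addr0 mulN1r addNr. Qed.
Lemma linZ a x : h (a *: x) = a * h x.
Proof. by have := Hh a x 0; rewrite addr0 lin0 addr0. Qed.
Lemma linD x y : h (x + y) = h x + h y.
Proof. by have := Hh 1 x y; rewrite scale1r mul1r. Qed.
Lemma linN x : h (- x) = - h x.
Proof. by rewrite -scaleN1r linZ mulN1r. Qed.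
Lemma linB x y : h (x - y) = h x - h y.
Proof. by rewrite linD linN. Qed.

Definition Hm (x : M * R) : (R^o * R)%type := (h x.1, x.2).

Lemma Hm_eq p x y : locM_eq p x y -> locM_eq (M:=R^o) p (Hm x) (Hm y).
Proof.
move=> [u [nu H]]; exists u; split => //.
have := congr1 h H; rewrite linZ linB !linZ lin0 => H'; exact: H'.
Qed.

Lemma Hm_add x y : Hm (locM_add x y) = locM_add (M:=R^o) (Hm x) (Hm y).
Proof. by rewrite /Hm /locM_add /= linD !linZ. Qed.

Lemma Hm_scale c x : Hm (locM_scale c x) = locM_scale (M:=R^o) c (Hm x).
Proof. by rewrite /Hm /locM_scale /= linZ. Qed.

Lemma Hm_zero : Hm (@locM_zero R M) = @locM_zero R R^o.
Proof. by rewrite /Hm /locM_zero /= lin0. Qed.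

Lemma Hm_foldr (T : Type) (s : seq T) (t : T -> M * R) :
  Hm (foldr (@locM_add R M) (@locM_zero R M) (map t s)) = foldr (@locM_add R R^o) (@locM_zero R R^o) (map (fun i => Hm (t i)) s).
Proof. elim: s => [|i s IH] /=; first exact: Hm_zero. by rewrite Hm_add IH. Qed.

Lemma Hm_sum n (c : 'I_n -> R * R) (e : 'I_n -> M * R) :
  Hm (locM_sum c e) = locM_sum (M:=R^o) c (fun k => Hm (e k)).
Proof.
rewrite /locM_sum Hm_foldr; congr (foldr _ _ _); apply: eq_map => k /=; exact: Hm_scale.
Qed.
End Lin.

Section Ecl.
Variables (R : comPzRingType) (M : lmodType R).

Lemma lin_comb n (a : 'I_n -> R) (f : 'I_n -> M -> R) :
  (forall l, linearR (f l)) -> linearR (fun x => \sum_(l < n) a l * f l x).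
Proof.
move=> Hf b x y.
under eq_bigr do rewrite Hf.
rewrite mulr_sumr -big_split /=; apply: eq_bigr => l _; ring.
Qed.

Lemma E_comb (E : (M -> R) -> Prop) : hom_submod E ->
  forall n (a : 'I_n -> R) (f : 'I_n -> M -> R), (forall l, E (f l)) ->
  E (fun x => \sum_(l < n) a l * f l x).
Proof.
move=> [_ [E0 [ED EZ]]]; elim=> [|n IH] a f Hf.
  have ->: (fun x => \sum_(l < 0) a l * f l x) = (fun _ => 0).
    by apply: functional_extensionality => x; rewrite big_ord0.
  exact: E0.
have ->: (fun x => \sum_(l < n.+1) a l * f l x) =
   (fun x => (fun y => a ord0 * f ord0 y) x + (fun y => \sum_(l < n) a (lift ord0 l) * f (lift ord0 l) y) x).
  by apply: functional_extensionality => x; rewrite big_ord_recl.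
apply: ED; first exact: EZ.
exact: IH.
Qed.
End Ecl.

Section Fwd.
Variables (R : comPzRingType) (M : lmodType R) (p : R -> Prop).
Hypothesis Hp : is_prime p.

Theorem char_fwd (E : (M -> R) -> Prop) (S : M -> Prop) n :
  hom_submod E -> free_E_summand_in p E (Defs.span S) n ->
  exists (f : 'I_n -> M -> R) (m : 'I_n -> M), (forall i, E (f i)) /\ (forall j, Defs.span S (m j)) /\
    ~ p (\det (\matrix_(i, j) f i (m j))).
Proof.
move=> [Elin _] [e [G [phi [He [[G1 [G2 [G3 [G4 G5]]]] [Hsub [Hphi [Hdec Huniq]]]]]]]].
have Hms : forall j, exists ms : M * R, Defs.span S ms.1 /\ ~ p ms.2 /\ locM_eq p (e j) ms.
  by move=> j; have [m [s [H1 [H2 H3]]]] := Hsub j; exists (m, s).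
pose ms j := proj1_sig (constructive_indefinite_description _ (Hms j)).
have Hms' j : Defs.span S (ms j).1 /\ ~ p (ms j).2 /\ locM_eq p (e j) (ms j) :=
  proj2_sig (constructive_indefinite_description _ (Hms j)).
pose f i := (phi i).1; pose t i := (phi i).2.
pose m j := (ms j).1; pose s j := (ms j).2.
exists f, m; split; first by move=> i; case: (Hphi i).
split; first by move=> j; case: (Hms' j).
have vsc : forall (c : R * R) x, ~ p c.2 -> ~ p x.2 -> ~ p (locM_scale c x).2.
  by move=> c x H1 H2; apply: npM.
have K : forall ij : 'I_n * 'I_n, exists w, ~ p w /\
    w * ((e ij.2).2 * f ij.1 (m ij.2) - s ij.2 * t ij.1 * (e ij.2).2 * (ij.1 == ij.2)%:R) = 0.
  move=> [i j] /=.
  have [g [Gg Hg]] := Hdec (e j) (He j).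
  pose c' := fun k : 'I_n => (((k == j)%:R : R), (1 : R)).
  have Hsum : locM_eq p (locM_add (locM_sum c' e) (@locM_zero R M)) (e j).
    apply: (@eqT _ _ _ Hp _ (locM_sum c' e)).
        by apply: valid_foldr => // k; apply: vsc; [exact: np1|exact: He].
      exact: add0_eq.
    apply: (@sum_single _ _ _ Hp n _ j) => //.
        by move=> k; apply: vsc; [exact: np1|exact: He].
      move=> k nkj; apply/eq_cross => //; exists 1; split; first exact: np1.
      by rewrite /c' /= (negbTE nkj) /= scale0r !scaler0.
    apply/eq_cross => //; exists 1; split; first exact: np1.
    by rewrite /c' /= eqxx /= scale1r !mul1r.
  have Hu := Huniq (fun k => Eapp (phi k) (e j)) c' g (@locM_zero R M).
  have := Hu _ Gg G3 _ i.
  case.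
  - move=> k; split; first by apply: npM => //; [case: (Hphi k)|exact: He].
    exact: np1.
  - apply: (@eqT _ _ _ Hp _ (e j)); first exact: He.
      exact: eqS.
    exact: eqS.
  move=> u [nu Hu'].
  have [_ [_ /eq_cross [v [nv Hv]]]] := Hms' j.
  have Hv' := congr1 (phi i).1 Hv; rewrite !(linZ (Elin _ (proj1 (Hphi i)))) in Hv'.
  exists (u * v); split; first exact: npM.
  rewrite /= in Hu' Hv'; rewrite /f /t /m /s.
  set F1 := (phi i).1 (e j).1 in Hu' Hv' *; set Fm := (phi i).1 (ms j).1 in Hv' *.
  set d := ((i == j)%:R : R) in Hu' *.
  have ->: u * v * ((e j).2 * Fm - (ms j).2 * (phi i).2 * (e j).2 * d) =
    u * (v * (e j).2 * Fm - v * (ms j).2 * F1) + v * (ms j).2 * (u * (1 * F1 - (phi i).2 * (e j).2 * d)) by ring.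
  by rewrite -Hv' subrr mulr0 Hu' mulr0 addr0.
have [W [nW HW]] := witness_prod Hp K.
set A := \matrix_(i, j) f i (m j).
have Hmat: A *m diag_mx (\row_j (W * (e j).2)) = diag_mx (\row_j (W * (s j * t j * (e j).2))).
  apply/matrixP => i j; rewrite mul_mx_diag !mxE.
  have := HW (i, j); rewrite /=.
  case: (eqVneq i j) => [<-|nij] H.
    rewrite /= ?mulr1n in H *.
    apply/eqP; rewrite -subr_eq0; apply/eqP; rewrite -H; ring.
  rewrite /= ?mulr0n in H *.
  rewrite -H; ring.
have Hdet := congr1 determinant Hmat.
rewrite det_mulmx !det_diag in Hdet.
move=> pA; have: p (\prod_i (\row_j (W * (s j * t j * (e j).2))) 0 i).
  by rewrite -Hdet; apply: pMr.
apply: np_prod => // i; rewrite mxE.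
apply: npM => //.
have h1 : ~ p (s i) by case: (Hms' i) => _ [].
have h2 : ~ p (t i) by case: (Hphi i).
have h3 := He i.
by apply: npM => //; apply: npM.
Qed.
End Fwd.

Section Bwd.
Variables (R : comPzRingType) (M : lmodType R) (p : R -> Prop).
Hypothesis Hp : is_prime p.

Theorem char_bwd (E : (M -> R) -> Prop) (S : M -> Prop) n (f : 'I_n -> M -> R) (m : 'I_n -> M) :
  hom_submod E -> (forall i, E (f i)) -> (forall j, Defs.span S (m j)) ->
  ~ p (\det (\matrix_(i, j) f i (m j))) -> free_E_summand_in p E (Defs.span S) n.
Proof.
move=> HE Ef Sm nd.
have Elin := proj1 HE.
set A := \matrix_(i, j) f i (m j) in nd.
set d := \det A in nd.
pose C := \adj A.
pose h i x := \sum_(l < n) C i l * f l x.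
have hlin i : linearR (h i) by apply: lin_comb => l; apply: Elin.
have hE i : E (h i) by apply: E_comb.
have hm i k : h i (m k) = d * (i == k)%:R.
  have := congr1 (fun B : 'M[R]_n => B i k) (mul_adj_mx A).
  rewrite !mxE /= -/d mulr_natr => <-; apply: eq_bigr => l _; by rewrite [A _ _]mxE.
pose e j := (m j, 1 : R).
pose phi i := (h i, d).
pose G (x : M * R) := ~ p x.2 /\ forall i, exists u, ~ p u /\ u * h i x.1 = 0.
have n1 := np1 Hp.
have ve j : locM_valid p (e j) by [].
have SS : forall i (c : 'I_n -> R * R), (forall k, locR_valid p (c k)) ->
    locM_eq (M:=R^o) p (locM_sum (M:=R^o) c (fun k => Hm (h i) (e k))) ((c i).1 * d, (c i).2).
  move=> i c Hc.
  apply: (@sum_single _ _ _ Hp n _ i).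
  - by move=> k; apply: npM => //; apply: Hc.
  - move=> k nki; apply/eq_cross; exists 1; split => //.
    rewrite /= hm eq_sym (negbTE nki) /= mulr0 !scaler0 //.
  - apply/eq_cross; exists 1; split => //.
    by rewrite /= hm eqxx /= !mul1r !mulr1.
have vsum : forall i (cc : 'I_n -> R * R), (forall k, ~ p (cc k).2) ->
    ~ p (locM_sum (M:=R^o) cc (fun k => Hm (h i) (e k))).2.
  move=> i cc Hcc; apply: valid_foldr => // k; by apply: npM.
exists e, G, phi; split; first by move=> i; exact: n1.
split.
  split; first by move=> x [].
  split.
    move=> x y [vx Hx] vy /eq_cross [v [nv Hv]]; split => // i.
    have [u [nu Hu]] := Hx i.
    have Hv' := congr1 (h i) Hv; rewrite !(linZ (hlin i)) in Hv'.
    exists (u * v * x.2); split; first by apply: npM => //; apply: npM.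
    have ->: u * v * x.2 * h i y.1 = u * (v * x.2 * h i y.1) by ring.
    rewrite -Hv'.
    have ->: u * (v * y.2 * h i x.1) = v * y.2 * (u * h i x.1) by ring.
    by rewrite Hu mulr0.
  split.
    split => // i; exists 1; split => //; by rewrite /= (lin0 (hlin i)) mulr0.
  split.
    move=> x y [vx Hx] [vy Hy]; split; first by apply: npM.
    move=> i; have [u [nu Hu]] := Hx i; have [u' [nu' Hu']] := Hy i.
    exists (u * u'); split; first by apply: npM.
    rewrite /= (linD (hlin i)) !(linZ (hlin i)).
    have ->: u * u' * (y.2 * h i x.1 + x.2 * h i y.1) = u' * y.2 * (u * h i x.1) + u * x.2 * (u' * h i y.1) by ring.
    by rewrite Hu Hu' !mulr0 addr0.
  move=> c x vc [vx Hx]; split; first by apply: npM.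
  move=> i; have [u [nu Hu]] := Hx i; exists u; split => //.
  rewrite /= (linZ (hlin i)).
  have ->: u * (c.1 * h i x.1) = c.1 * (u * h i x.1) by ring.
  by rewrite Hu mulr0.
split.
  move=> i; exists (m i), 1; split => //; split => //; exact: eqR.
split.
  by move=> i; split; [exact: hE|exact: nd].
split.
  move=> x vx.
  set Sg := locM_sum (fun i => Eapp (phi i) x) e.
  have vS : ~ p Sg.2.
    apply: valid_foldr => // k; apply: npM => //; exact: npM.
  exists (Sg.2 *: x.1 - x.2 *: Sg.1, x.2 * Sg.2); split.
    split; first by apply: npM.
    move=> i.
    have H := SS i (fun k => Eapp (phi k) x) (fun k => npM Hp nd vx).
    rewrite -(Hm_sum (hlin i)) in H.
    move/eq_cross: H => [u [nu H]].
    have H' : u * (d * x.2) * h i Sg.1 = u * Sg.2 * (h i x.1 * d) := H.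
    exists (u * d); split; first by apply: npM.
    rewrite /= (linB (hlin i)) !(linZ (hlin i)).
    have ->: u * d * (Sg.2 * h i x.1 - x.2 * h i Sg.1) = u * Sg.2 * (h i x.1 * d) - u * (d * x.2) * h i Sg.1 by ring.
    by rewrite H' subrr.
  apply/eq_cross; exists 1; split => //; rewrite /=.
  rewrite scalerBr !scalerA.
  have ->: Sg.2 * x.2 = x.2 * Sg.2 by rewrite mulrC.
  rewrite addrCA subrr addr0 scalerA; congr (_ *: _); ring.
move=> c c' g g' Hc Gg Gg' H i.
have H1 := Hm_eq (hlin i) H; rewrite !(Hm_add (hlin i)) !(Hm_sum (hlin i)) in H1.
have Q : forall (cc : 'I_n -> R * R) gg, (forall k, locR_valid p (cc k)) -> G gg ->
    locM_eq (M:=R^o) p (locM_add (locM_sum (M:=R^o) cc (fun k => Hm (h i) (e k))) (Hm (h i) gg)) ((cc i).1 * d, (cc i).2).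
  move=> cc gg Hcc [vg Hg].
  pose y0 : (R^o * R)%type := locM_add (M:=R^o) ((cc i).1 * d, (cc i).2) (@locM_zero R R^o).
  have T1 : locM_eq (M:=R^o) p (locM_add (locM_sum (M:=R^o) cc (fun k => Hm (h i) (e k))) (Hm (h i) gg)) y0.
    apply: (add_congr Hp); first exact: (SS i cc Hcc).
    have [u [nu Hu]] := Hg i; apply/eq_cross; exists u; split => //.
    by rewrite /= scaler0 mulr1.
  have T2 : locM_eq (M:=R^o) p y0 ((cc i).1 * d, (cc i).2) by apply: add0_eq.
  apply: (eqT Hp _ T1 T2).
  by apply: npM => //; apply: Hcc.
have Q1 := Q c g (fun k => proj1 (Hc k)) Gg.
have Q2 := Q c' g' (fun k => proj2 (Hc k)) Gg'.
have V : locM_eq (M:=R^o) p ((c i).1 * d, (c i).2) ((c' i).1 * d, (c' i).2).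
  apply: (@eqT R R^o p Hp _ _ _ _ (eqS Q1)).
    apply: (npM Hp); first by apply: vsum => k; case: (Hc k).
    by case: Gg.
  apply: (@eqT R R^o p Hp _ _ _ _ H1) => //.
  apply: (npM Hp); first by apply: vsum => k; case: (Hc k).
  by case: Gg'.
move/eq_cross: V => [u [nu Hu]].
have Hu' : u * (c' i).2 * ((c i).1 * d) = u * (c i).2 * ((c' i).1 * d) := Hu.
exists (u * d); split; first by apply: npM.
have ->: u * d * ((c' i).2 * (c i).1 - (c i).2 * (c' i).1) = u * (c' i).2 * ((c i).1 * d) - u * (c i).2 * ((c' i).1 * d) by ring.
by rewrite Hu' subrr.
Qed.
End Bwd.

Section Final.
Variables (R : comPzRingType) (M : lmodType R).

Lemma lin_sum (h : M -> R) (Hh : linearR h) n (a : 'I_n -> R) (v : 'I_n -> M) :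
  h (\sum_(k < n) a k *: v k) = \sum_(k < n) a k * h (v k).
Proof.
rewrite (big_morph h (linD Hh) (lin0 Hh)); apply: eq_bigr => k _; exact: linZ.
Qed.

Lemma det_small N (g : 'I_N -> M) :
  (forall m, exists c : 'I_N -> R, m = \sum_(i < N) c i *: g i) ->
  forall n (f : 'I_n -> M -> R) (m : 'I_n -> M), (forall i, linearR (f i)) -> (N < n)%N ->
  \det (\matrix_(i, j) f i (m j)) = 0.
Proof.
move=> Hg n f m Hf Hn.
pose c j := proj1_sig (constructive_indefinite_description _ (Hg (m j))).
have Hc j : m j = \sum_(i < N) c j i *: g i := proj2_sig (constructive_indefinite_description _ (Hg (m j))).
pose G' (k : 'I_n) : M := if (insub (val k) : option 'I_N) is Some l then g l else 0.
pose C' (j k : 'I_n) : R := if (insub (val k) : option 'I_N) is Some l then c j l else 0.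
have Hm j : m j = \sum_(k < n) C' j k *: G' k.
  rewrite Hc.
  pose F (x : nat) : M := if (insub x : option 'I_N) is Some l then c j l *: g l else 0.
  have ->: \sum_(i < N) c j i *: g i = \sum_(i < N) F i.
    by apply: eq_bigr => i _; rewrite /F valK.
  rewrite (big_ord_widen n F (ltnW Hn)) big_mkcond /=; apply: eq_bigr => k _.
  rewrite /F /C' /G'.
  case: (ltnP k N) => HkN /=.
    by rewrite (insubT (fun x => x < N)%N HkN).
  by rewrite insubF ?scaler0 // ltnNge HkN.
have HA : \matrix_(i, j) f i (m j) = (\matrix_(i, k) f i (G' k)) *m (\matrix_(k, j) C' j k).
  apply/matrixP => i j; rewrite !mxE Hm (lin_sum (Hf i)); apply: eq_bigr => k _; by rewrite !mxE mulrC.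
rewrite HA det_mulmx (expand_det_col _ (Ordinal Hn)) big1 ?mul0r // => i _.
by rewrite mxE /G' /= insubF ?(lin0 (Hf i)) ?mul0r // ltnn.
Qed.

Lemma delta_ext (p q : R -> Prop) (E : (M -> R) -> Prop) (S : M -> Prop) :
  (forall n, free_E_summand_in p E (Defs.span S) n <-> free_E_summand_in q E (Defs.span S) n) ->
  delta p E S = delta q E S.
Proof.
move=> H; rewrite /delta; congr (epsilon _ _).
apply: functional_extensionality => n; apply: propositional_extensionality.
split=> [[H1 H2]|[H1 H2]]; split.
- by apply/H.
- by move=> k /H; apply: H2.
- by apply/H.
- by move=> k /H; apply: H2.
Qed.

Lemma In_iota k : forall m n, (m <= n)%N -> (n < m + k)%N -> List.In n (iota m k).
Proof.
elim: k => [|k IH] m n H1 H2 /=; first by rewrite addn0 in H2; move: (leq_ltn_trans H1 H2); rewrite ltnn.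
case: (eqVneq m n) => [->|nmn]; first by left.
right; apply: IH; first by rewrite ltn_neqAle nmn H1.
by rewrite addSnnS.
Qed.
End Final.

Theorem lemma4p2 (R : comPzRingType) (M : lmodType R)
    (X : (R -> Prop) -> Prop) (E : (M -> R) -> Prop) (S : M -> Prop) :
  noetherian R -> fin_gen M -> subset_Spec X -> basic X -> hom_submod E ->
  exists Lambda : seq (R -> Prop),
    (forall q, List.In q Lambda -> X q) /\
    forall p, X p -> ~ List.In p Lambda ->
      exists q, List.In q Lambda /\ (forall x, q x -> p x) /\ q <> p /\
        delta p E S = delta q E S.
Proof.
move=> HN [N [g Hg]] HX Hbasic HE.
pose D n : R -> Prop := fun d => exists (f : 'I_n -> M -> R) (m : 'I_n -> M),
  (forall i, E (f i)) /\ (forall j, Defs.span S (m j)) /\ d = \det (\matrix_(i, j) f i (m j)).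
pose Js := List.map D (iota 0 N.+1).
have FS_iff : forall p, is_prime p -> forall n,
    free_E_summand_in p E (Defs.span S) n <-> ~ (forall d, D n d -> p d).
  move=> p Hp n; split.
    move/(char_fwd Hp HE) => [f [m [Ef [Sm nd]]]] H; apply: nd; apply: H; exists f, m; split => //.
  move=> H; apply: NNPP => nF; apply: H => d [f [m [Ef [Sm ->]]]].
  apply: NNPP => nd; apply: nF; exact: (char_bwd Hp HE Ef Sm nd).
have Dbig : forall n, (N < n)%N -> forall d, D n d -> d = 0.
  move=> n Hn d [f [m [Ef [Sm ->]]]]; apply: (det_small Hg) => // i.
  exact: (proj1 HE).
have [L [cL HL]] := coverB HN Js HX.
exists L; split.
  move=> q /cL [Pq [F [HF EF]]]; rewrite EF; apply: Hbasic => //; by rewrite -EF.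
move=> p Xp nLp.
have [P [LP [Pp ST]]] := HL p Xp.
exists P; split => //; split => //; split.
  by move=> EPp; apply: nLp; rewrite -EPp.
have [Pprime _] := cL P LP.
have pprime := HX p Xp.
symmetry; apply: delta_ext => n; rewrite (FS_iff P Pprime) (FS_iff p pprime).
case: (leqP n N) => Hn.
  have InJ : List.In (D n) Js.
    by apply: List.in_map; apply: In_iota.
  have := ST (D n) InJ; move=> [H1 H2]; split => Hn1 Hn2; apply: Hn1; [apply: H2 | apply: H1] => //.
split => Hn1; case: Hn1 => d /(Dbig n Hn) ->; exact: pp0.
Qed.
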